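(* Let $\lambda,\mu$ be integral partitions with $\lambda\neq\mu$, and suppose $\|\lambda\|_p=\|\mu\|_p$ for some real $p$ with $1<p<\infty$. Then $\lambda^{\times n}\not\hookrightarrow\mu^{\times n}$ for every positive integer $n$.
   Context: An integral partition is a finite nonincreasing sequence of positive integers (equality means equality as multisets of entries). For $p\in[1,\infty)$, $\|\lambda\|_p=(\sum_i\lambda_i^p)^{1/p}$. The product $\lambda\times\mu$ of $\lambda=[\lambda_1,\ldots,\lambda_m]$ and $\mu=[\mu_1,\ldots,\mu_n]$ is the partition whose entries are all products $\lambda_i\mu_j$ ($1\le i\le m$, $1\le j\le n$), reordered nonincreasingly; $\lambda^{\times n}$ is the $n$-fold product $\lambda\times\cdots\times\lambda$. $\lambda$ embeds into $\mu$, written $\lambda\hookrightarrow\mu$, if there is a map $\varphi:\{1,\ldots,m\}\to\{1,\ldots,n\}$ with $\sum_{i\in\varphi^{-1}(j)}\lambda_i\le\mu_j$ for all $j$. *)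

(* Defs.v *)
From Stdlib Require Import Reals.
From mathcomp Require Import all_boot.
Set Implicit Arguments. Unset Strict Implicit. Unset Printing Implicit Defensive.

Definition is_partition (l : seq nat) : bool :=
  all (fun x => 0 < x) l && sorted geq l.

(* Rpower x y = exp (y * ln x) is only meaningful for x > 0; the sum is
   positive unless l is empty, whose norm is 0. *)
Definition pnorm (p : R) (l : seq nat) : R :=
  if l is [::] then R0 else Rpower (foldr (fun x acc => Rplus (Rpower (INR x) p) acc) R0 l) (Rinv p).

Definition pprod (l m : seq nat) : seq nat :=
  sort geq [seq x * y | x <- l, y <- m].

(* n-fold product l^{x n} (used for n >= 1; l^{x 1} = pprod l [::1] = l for a partition). *)
Definition ppow (l : seq nat) (n : nat) : seq nat := iter n (pprod l) [:: 1].

Definition embeds (l m : seq nat) : Prop :=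
  exists phi : 'I_(size l) -> 'I_(size m),
    forall j : 'I_(size m), \sum_(i < size l | phi i == j) nth 0 l i <= nth 0 m j.

(* Main.v *)
Require Import Defs.
From Stdlib Require Import Reals Lra.
From HB Require Import structures.
From mathcomp Require Import all_boot zify.

Definition psum (t : nat) (l : seq nat) := \sum_(x <- l) x ^ t.

Lemma perm_sort_geq (s : seq nat) : perm_eq (sort geq s) s.
Proof. by rewrite perm_sort perm_refl. Qed.

Lemma psum_pprod t l m : psum t (pprod l m) = psum t l * psum t m.
Proof.
rewrite /psum /pprod (perm_big _ (perm_sort_geq _)).
elim: l => [|x l IH]; first by rewrite !big_nil.
rewrite /= big_cat big_map IH big_cons mulnDl; congr (_ + _).
by rewrite big_distrr; apply: eq_bigr => y _; rewrite expnMn.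
Qed.

Lemma psum_ppow t l n : psum t (ppow l n) = psum t l ^ n.
Proof.
elim: n => [|n IH]; first by rewrite /psum /= big_cons big_nil exp1n.
by rewrite /ppow iterS -/(ppow l n) psum_pprod IH expnS.
Qed.

Lemma leq_expl x y t : x <= y -> x ^ t <= y ^ t.
Proof. by move=> h; elim: t => [|t IH] //; rewrite !expnS leq_mul. Qed.

Lemma growth a t : a ^ t * (a + t) <= a * (a + 1) ^ t.
Proof.
elim: t => [|t IH]; first by rewrite !expn0; lia.
rewrite !expnS.
have h1 : a * a ^ t * (a + t.+1) <= (a + 1) * (a ^ t * (a + t)) by nia.
apply: (leq_trans h1); by rewrite [X in _ <= X]mulnCA leq_mul2l IH orbT.
Qed.

Lemma big_exists {M N} : 0 < N -> 0 < M -> N * (M - 1) ^ (N * M) < M ^ (N * M).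
Proof.
move=> hN hM.
have [->|ha] := eqVneq (M - 1) 0.
  rewrite exp0n ?muln0; first by rewrite expn_gt0 hM.
  by rewrite muln_gt0 hN hM.
have := growth (M - 1) (N * M).
have -> : M - 1 + 1 = M by lia.
set X := (M - 1) ^ (N * M); set Y := M ^ (N * M) => h.
have hpos : 0 < M - 1 by lia.
have : (M - 1) * (N * X) < (M - 1) * Y.
  apply: (leq_trans _ h).
  have hX : 0 < X by rewrite expn_gt0 hpos.
  nia.
by rewrite ltn_pmul2l.
Qed.

Lemma filter_pred1E (M : nat) l : filter (pred1 M) l = nseq (count_mem M l) M.
Proof.
elim: l => [|x l IH] //=; case: eqP => [->|] /=; by rewrite IH // add0n.
Qed.

Lemma psum_split t M l :
  psum t l = count_mem M l * M ^ t + psum t (filter (predC1 M) l).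
Proof.
rewrite /psum (bigID (pred1 M)) /= big_filter; congr (_ + _).
rewrite (eq_bigr (fun=> M ^ t)); last by move=> i /eqP ->.
rewrite big_const_seq /=.
elim: (count _ l) => [|k IH] //=; by rewrite IH mulSn.
Qed.

Lemma psum_bound t M l : (forall x, x \in l -> x < M) -> psum t l <= size l * (M - 1) ^ t.
Proof.
elim: l => [|x l IH] h; first by rewrite /psum big_nil.
rewrite /psum big_cons /= mulSn; apply: leq_add.
  apply: leq_expl; have := h x (mem_head _ _); lia.
by apply: IH => y hy; apply: h; rewrite in_cons hy orbT.
Qed.

Definition maxs (s : seq nat) := foldr maxn 0 s.

Lemma maxs_ge s x : x \in s -> x <= maxs s.
Proof.
elim: s => [|y s IH] //; rewrite in_cons => /orP [/eqP ->|h] /=; first by apply: leq_maxl.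
by apply: leq_trans (IH h) (leq_maxr _ _).
Qed.

Lemma maxs_in s : s <> [::] -> maxs s \in s.
Proof.
elim: s => [|y s IH] // _ /=; case: s IH => [|z s] IH /=; first by rewrite maxn0 mem_head.
have := IH (fun e => match e with end).
rewrite /maxn; case: ltnP => _ h; first by rewrite in_cons h orbT.
by rewrite mem_head.
Qed.

Lemma cnt_eq cA cB M LA LB (s : nat -> nat) :
  (forall t, cA * M ^ t + s t = cB * M ^ t + LA t) ->
  (forall t, s t <= LB * (M - 1) ^ t) ->
  (0 < LB -> 0 < M) -> cB <= cA.
Proof.
move=> E B hM; rewrite leqNgt; apply/negP => lt.
have [LB0|LBpos] := posnP LB.
  have := E 0; have := B 0; rewrite LB0 !expn0; lia.
have hMp := hM LBpos.
have := big_exists LBpos hMp; set t := LB * M => G.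
have := E t; have := B t.
set X := M ^ t; set Y := (M - 1) ^ t => h1 h2.
have : cB * X >= cA * X + X by rewrite -mulSnr leq_mul2r lt orbT.
lia.
Qed.

Lemma ps_eq_perm : forall l m : seq nat, (forall t, psum t l = psum t m) -> perm_eq l m.
Proof.
move=> l m; move: {2}(size l + size m) (leqnn (size l + size m)) => k.
elim: k l m => [|k IH] l m hk E.
  by case: l m hk E => [|? ?] [|? ?].
have [lm0|lm0] := eqVneq (l ++ m) [::].
  by case: l m lm0 {hk E} => [|? ?] [|? ?].
set M := maxs (l ++ m).
have Min : M \in l ++ m by apply: maxs_in; apply/eqP.
have lt_l : forall x, x \in filter (predC1 M) l -> x < M.
  move=> x; rewrite mem_filter /= => /andP [hx hl].
  rewrite ltn_neqAle hx maxs_ge // mem_cat hl //.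
have lt_m : forall x, x \in filter (predC1 M) m -> x < M.
  move=> x; rewrite mem_filter /= => /andP [hx hl].
  rewrite ltn_neqAle hx maxs_ge // mem_cat hl orbT //.
have pos_l : 0 < size (filter (predC1 M) l) -> 0 < M.
  case: (filter _ l) lt_l => [|y s] // h _; have := h y (mem_head _ _); lia.
have pos_m : 0 < size (filter (predC1 M) m) -> 0 < M.
  case: (filter _ m) lt_m => [|y s] // h _; have := h y (mem_head _ _); lia.
have Ec : count_mem M l = count_mem M m.
  apply/eqP; rewrite eqn_leq; apply/andP; split.
  - apply: (@cnt_eq _ _ M (fun t => psum t (filter (predC1 M) l)) _ (fun t => psum t (filter (predC1 M) m))).
    + by move=> t /=; rewrite -!psum_split.
    + by move=> t; apply: psum_bound.
    + exact: pos_m.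
  - apply: (@cnt_eq _ _ M (fun t => psum t (filter (predC1 M) m)) _ (fun t => psum t (filter (predC1 M) l))).
    + by move=> t /=; rewrite -!psum_split.
    + by move=> t; apply: psum_bound.
    + exact: pos_l.
have Ep : perm_eq (filter (predC1 M) l) (filter (predC1 M) m).
  apply: IH.
    have hl := count_size (predC1 M) l; have hm := count_size (predC1 M) m.
    rewrite !size_filter.
    have cl := count_predC (pred1 M) l; have cm := count_predC (pred1 M) m.
    have : 0 < count (pred1 M) l + count (pred1 M) m.
      move: Min; rewrite mem_cat => /orP [h|h].
      - by rewrite ltn_addr // -has_count has_pred1.
      - by rewrite ltn_addl // -has_count has_pred1.
    move: hk cl cm; rewrite /predC1 /predC /=. lia.
  move=> t; have := psum_split t M l; have := psum_split t M m.
  rewrite (E t) Ec; lia.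
apply: (@perm_trans _ (filter (pred1 M) l ++ filter (predC (pred1 M)) l)).
  by rewrite perm_sym perm_filterC.
apply: (@perm_trans _ (filter (pred1 M) m ++ filter (predC (pred1 M)) m)).
  by rewrite !filter_pred1E Ec perm_cat2l; exact: Ep.
by rewrite perm_filterC.
Qed.

Lemma cancel_perm l m n : 0 < n -> perm_eq (ppow l n) (ppow m n) -> perm_eq l m.
Proof.
move=> hn hpm; apply: ps_eq_perm => t; apply: (expIn hn); rewrite /= -!psum_ppow /psum.
exact: perm_big.
Qed.

Lemma allpos_pprod l m : all (fun x => 0 < x) l -> all (fun x => 0 < x) m ->
  all (fun x => 0 < x) (pprod l m).
Proof.
rewrite /pprod all_sort => hl hm; elim: l hl => [|x l IH] //= /andP [hx hl].
rewrite all_cat IH // andbT all_map; apply/allP => y hy /=.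
by rewrite muln_gt0 hx (allP hm y hy).
Qed.

Lemma allpos_ppow l n : all (fun x => 0 < x) l -> all (fun x => 0 < x) (ppow l n).
Proof.
move=> hl; elim: n => [|n IH] //; rewrite /ppow iterS; exact: allpos_pprod.
Qed.
Open Scope R_scope.
Lemma Rpa : associative Rplus. Proof. by move=> *; rewrite Rplus_assoc. Qed.
HB.instance Definition _ := Monoid.isComLaw.Build R R0 Rplus Rpa Rplus_comm Rplus_0_l.

Definition f (p : R) (x : nat) : R := Rpower (INR x) p.
Definition S (p : R) (l : seq nat) : R := \big[Rplus/R0]_(x <- l) f p x.

Lemma INR_pos x : (0 < x)%N -> (0 < INR x).
Proof. by move=> h; apply: lt_0_INR; apply/ltP. Qed.

Lemma f_pos p x : (0 < f p x).
Proof. by rewrite /f /Rpower; apply: exp_pos. Qed.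

Lemma f_lt p x y : (0 < p) -> (0 < x)%N -> (x < y)%N -> (f p x < f p y).
Proof.
move=> hp hx hxy; apply: Rlt_Rpower_l => //; split; first exact: INR_pos.
by apply: lt_INR; apply/ltP.
Qed.

Lemma f_le p x y : (0 < p) -> (0 < x)%N -> (x <= y)%N -> (f p x <= f p y).
Proof.
move=> hp hx; rewrite leq_eqVlt => /orP [/eqP ->|h]; first by apply: Rle_refl.
by apply: Rlt_le; apply: f_lt.
Qed.

Lemma Rsuper p a b : (1 < p) -> (0 < a) -> (0 < b) ->
  (Rpower a p + Rpower b p < Rpower (a + b) p).
Proof.
move=> hp ha hb.
have E : forall c, (0 < c) -> Rpower c p = (c * Rpower c (p - 1)).
  move=> c hc; rewrite -{2}(Rpower_1 c hc) -Rpower_plus; congr Rpower; ring.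
rewrite (E a ha) (E b hb) (E (a + b) ltac:(lra)).
have h1 : (Rpower a (p - 1) < Rpower (a + b) (p - 1)).
  apply: Rlt_Rpower_l; lra.
have h2 : (Rpower b (p - 1) < Rpower (a + b) (p - 1)).
  apply: Rlt_Rpower_l; lra.
nra.
Qed.

Lemma f_super p x y : (1 < p) -> (0 < x)%N -> (0 < y)%N -> (f p x + f p y < f p (x + y)%N).
Proof.
move=> hp hx hy; rewrite /f -[(x + y)%N]/(Nat.add x y) plus_INR.
by apply: Rsuper => //; apply: INR_pos.
Qed.

Lemma fiber_le p (I : Type) (r : seq I) (G : I -> nat) : (1 < p) ->
  (forall i, (0 < G i)%N) -> r <> [::] ->
  (\big[Rplus/R0]_(i <- r) f p (G i) <= f p (\sum_(i <- r) G i)) /\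
  ((1 < size r)%N -> (\big[Rplus/R0]_(i <- r) f p (G i) < f p (\sum_(i <- r) G i))).
Proof.
move=> hp hG; elim: r => [|i r IH] // _.
case: r IH => [|k r] IH.
  by rewrite !big_cons !big_nil addn0 Rplus_0_r; split=> //; apply: Rle_refl.
have [IH1 _] := IH (fun e => match e with end).
have hs : (0 < \sum_(j <- k :: r) G j)%N by rewrite big_cons ltn_addr.
have := @f_super p _ _ hp (hG i) hs.
rewrite !big_cons in IH1 * => h; split=> [|_]; lra.
Qed.

Lemma big_Rle (J : Type) (r : seq J) (a b : J -> R) :
  (forall j, a j <= b j) -> (\big[Rplus/R0]_(j <- r) a j <= \big[Rplus/R0]_(j <- r) b j).
Proof.
move=> h; elim: r => [|j r IH]; rewrite ?big_nil ?big_cons; first by apply: Rle_refl.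
by apply: Rplus_le_compat.
Qed.

Lemma big_Req (J : eqType) (r : seq J) (a b : J -> R) :
  (forall j, a j <= b j) -> \big[Rplus/R0]_(j <- r) a j = \big[Rplus/R0]_(j <- r) b j ->
  forall j, j \in r -> a j = b j.
Proof.
move=> h; elim: r => [|x r IH] //; rewrite !big_cons => E j.
have := @big_Rle _ r _ _ h; have := h x => h1 h2.
have ex : a x = b x by lra.
rewrite in_cons => /orP [/eqP ->|hj] //.
by apply: IH => //; lra.
Qed.

Lemma count_sum (T : Type) (a : pred T) s : (count a s = \sum_(x <- s) (a x : nat))%N.
Proof. by elim: s => [|x s IH]; rewrite ?big_nil ?big_cons //= IH. Qed.

Lemma key p (l m : seq nat) : (1 < p) -> all (fun x => (0 < x)%N) l -> all (fun x => (0 < x)%N) m ->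
  embeds l m -> S p l = S p m -> perm_eq l m.
Proof.
move=> hp /allP pl /allP pm [phi H] ES.
have hp0 : (0 < p) by lra.
set F := fun i : 'I_(size l) => nth 0%N l i.
have Fpos : forall i, (0 < F i)%N by move=> i; apply: pl; apply: mem_nth.
have Mpos : forall j : 'I_(size m), (0 < nth 0%N m j)%N by move=> j; apply: pm; apply: mem_nth.
set r := fun j : 'I_(size m) => [seq i <- index_enum 'I_(size l) | phi i == j].
have Sl : S p l = \big[Rplus/R0]_(j < size m) \big[Rplus/R0]_(i <- r j) f p (F i).
  rewrite /S (big_nth 0%N) big_mkord (partition_big phi xpredT) //.
  by apply: eq_bigr => j _; rewrite big_filter.
have Sm : S p m = \big[Rplus/R0]_(j < size m) f p (nth 0%N m j).
  by rewrite /S (big_nth 0%N) big_mkord.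
have Hn : forall j, (\sum_(i <- r j) F i <= nth 0%N m j)%N.
  by move=> j; rewrite big_filter; apply: H.
have le_j : forall j, (\big[Rplus/R0]_(i <- r j) f p (F i) <= f p (nth 0%N m j)).
  move=> j; have [->|ne] := eqVneq (r j) [::].
    by rewrite big_nil; apply: Rlt_le; apply: f_pos.
  have [h _] := @fiber_le p _ _ _ hp Fpos (elimN eqP ne).
  apply: (Rle_trans _ _ _ h); apply: f_le => //.
  case: (r j) ne => [|i s] // _; rewrite big_cons; have := Fpos i; lia.
have eq_j := @big_Req _ _ _ _ le_j (etrans (esym Sl) (etrans ES Sm)).
have fib : forall j, exists i0, r j = [:: i0] /\ F i0 = nth 0%N m j.
  move=> j; have ej := eq_j j (mem_index_enum j).
  have [e0|ne] := eqVneq (r j) [::].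
    by move: ej; rewrite e0 big_nil => ej; have := f_pos p (nth 0%N m j); lra.
  have [h1 h2] := @fiber_le p _ _ _ hp Fpos (elimN eqP ne).
  have hs : (0 < \sum_(i <- r j) F i)%N.
    case: (r j) ne => [|i s] // _; rewrite big_cons; have := Fpos i; lia.
  have := @f_le p _ _ hp0 hs (Hn j) => h3.
  case E : (r j) ne h1 h2 ej hs h3 => [|i0 [|i1 s]] // _ h1 h2 ej hs h3.
    exists i0; split => //.
    move: ej hs h3 (Hn j); rewrite E !big_cons !big_nil addn0 Rplus_0_r => ej hs h3 hn.
    apply/eqP; rewrite eqn_leq hn /=; rewrite leqNgt; apply/negP => lt.
    have := @f_lt p _ _ hp0 hs lt; lra.
  have := h2 isT; lra.
apply/permP => a.
rewrite !count_sum (big_nth 0%N) big_mkord [in RHS](big_nth 0%N) big_mkord.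
rewrite (partition_big phi xpredT) //; apply: eq_bigr => j _.
have [i0 [e1 e2]] := fib j.
rewrite -big_filter -/(r j) e1 big_cons big_nil /=.
by rewrite addn0 -e2.
Qed.

Lemma f_mul p x y : (0 < x)%N -> (0 < y)%N -> f p (x * y)%N = f p x * f p y.
Proof.
move=> hx hy; rewrite /f -[(x * y)%N]/(Nat.mul x y) mult_INR Rpower_mult_distr //; exact: INR_pos.
Qed.

Lemma S_pprod p l m : all (fun x => (0 < x)%N) l -> all (fun x => (0 < x)%N) m ->
  S p (pprod l m) = S p l * S p m.
Proof.
move=> hl /allP hm; rewrite /S /pprod (perm_big _ (perm_sort_geq _)).
elim: l hl => [|x l IH] /= hl; first by rewrite !big_nil Rmult_0_l.
move/andP: hl => [hx hl].
rewrite big_cat big_map IH // big_cons Rmult_plus_distr_r; congr Rplus.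
clear IH hl; elim: m hm => [|y m IHm] hm; first by rewrite !big_nil Rmult_0_r.
rewrite !big_cons f_mul ?(hm y (mem_head _ _)) // IHm; first by rewrite /= Rmult_plus_distr_l.
by move=> z hz; apply: hm; rewrite in_cons hz orbT.
Qed.

Lemma S_ppow p l n : all (fun x => (0 < x)%N) l -> S p (ppow l n) = S p l ^ n.
Proof.
move=> hl; elim: n => [|n IH].
  rewrite /S /= big_cons big_nil /f /Rpower /= ln_1 Rmult_0_r exp_0; ring.
rewrite /ppow iterS -/(ppow l n) S_pprod // ?IH //; exact: allpos_ppow.
Qed.

Lemma S_foldr p l : foldr (fun x acc => Rplus (Rpower (INR x) p) acc) R0 l = S p l.
Proof. by elim: l => [|x l IH]; rewrite /S ?big_nil ?big_cons //= IH. Qed.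

Lemma S_pos p l : l <> [::] -> 0 < S p l.
Proof.
case: l => [|x l] // _; rewrite /S big_cons.
have : 0 <= \big[Rplus/R0]_(y <- l) f p y.
  elim: l => [|y l IH]; rewrite ?big_nil ?big_cons; first by apply: Rle_refl.
  have := f_pos p y; lra.
have := f_pos p x; lra.
Qed.

Lemma pnorm_S p l m : 1 < p -> l <> m -> pnorm p l = pnorm p m -> S p l = S p m.
Proof.
move=> hp; rewrite /pnorm.
have E : forall A, 0 < A -> Rpower (Rpower A (/ p)) p = A.
  move=> A hA; rewrite Rpower_mult Rinv_l ?Rpower_1 //; lra.
case: l => [|x l]; case: m => [|y m] // _.
- rewrite -S_foldr => h; have := S_pos p (y :: m); rewrite -S_foldr.
  have : 0 < Rpower (foldr (fun x0 acc => Rpower (INR x0) p + acc) R0 (y :: m)) (/ p).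
    rewrite /Rpower; exact: exp_pos.
  lra.
- rewrite -S_foldr => h; have : 0 < Rpower (foldr (fun x0 acc => Rpower (INR x0) p + acc) R0 (x :: l)) (/ p).
    rewrite /Rpower; exact: exp_pos.
  lra.
- rewrite !S_foldr => h.
  rewrite -(E (S p (x :: l))) ?h ?E //; exact: S_pos.
Qed.
Close Scope R_scope.

Lemma geq_trans : transitive geq.
Proof. by move=> a b c h1 h2; apply: leq_trans h2 h1. Qed.

Lemma geq_anti : antisymmetric geq.
Proof. by move=> a b h; apply/eqP; rewrite eqn_leq andbC. Qed.

Theorem corollary2p2 (lam mu : seq nat) (p : R) :
  is_partition lam -> is_partition mu -> lam <> mu ->
  Rlt 1 p -> pnorm p lam = pnorm p mu ->
  forall n : nat, 0 < n -> ~ embeds (ppow lam n) (ppow mu n).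
Proof.
move=> /andP [pl sl] /andP [pm sm] neq hp hn n n0 emb.
have ES := @pnorm_S p lam mu hp neq hn.
have Ep : perm_eq (ppow lam n) (ppow mu n).
  apply: (@key p _ _ hp); rewrite ?allpos_ppow //.
  by rewrite !S_ppow // ES.
apply: neq; apply: (sorted_eq geq_trans geq_anti sl sm).
exact: cancel_perm n0 Ep.
Qed.
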